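(* Let $d_E$ be the Euclidean metric on $\mathbb R^n$, $\delta>0$, and let $w:\mathbb R^n\to\mathbb R^n$ be a contraction with respect to $d_E$ with contractivity factor $\lambda<\tfrac12$ and fixed point $x_f=\tilde o\in\mathcal D^n(\delta)$. Then the minimal absorbing set of the $\delta$-roundoff $\tilde w$ of $w$ (in $\mathcal D^n(\delta)$) is $\mathcal M[\tilde w]=\{\tilde o\}$.
   Context: For $m\in\mathbb Z^n$, $C_\delta(m)=\prod_{j=1}^n[(m_j-\tfrac12)\delta,(m_j+\tfrac12)\delta)$; $\mathcal D^n(\delta)=\{\delta m:m\in\mathbb Z^n\}\subset\mathbb R^n$. The $\delta$-roundoff of $x\in\mathbb R^n$ is $\tilde x=\delta m$ where $x\in C_\delta(m)$; the $\delta$-roundoff of $w$ is $\tilde w(\tilde x)=\widetilde{w(\tilde x)}$ on $\mathcal D^n(\delta)$. A set $\Lambda\subset\mathcal D^n(\delta)$ is absorbing for $\tilde w$ if for every $\tilde x\in\mathcal D^n(\delta)$ there is $N$ with $\tilde w^{\circ i}(\tilde x)\in\Lambda$ for all $i\ge N$; the minimal absorbing set $\mathcal M[\tilde w]$ is the intersection of all absorbing sets (which, for roundoffs of contractions, is itself absorbing). *)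

(* Defs.v *)
From mathcomp Require Import all_boot all_order all_algebra.
From mathcomp Require Import all_classical all_reals.
From mathcomp Require Import lra.
Set Implicit Arguments. Unset Strict Implicit. Unset Printing Implicit Defensive.
Import Order.TTheory GRing.Theory Num.Theory.
Local Open Scope ring_scope.
Local Open Scope classical_set_scope.

Definition dE (R : realType) (n : nat) (x y : 'rV[R]_n) : R :=
  Num.sqrt (\sum_(j < n) (x ord0 j - y ord0 j) ^+ 2).

Definition contraction (R : realType) (n : nat) (w : 'rV[R]_n -> 'rV[R]_n)
  (lambda : R) : Prop :=
  0 <= lambda < 1 /\ forall x y, dE (w x) (w y) <= lambda * dE x y.

Definition grid (R : realType) (n : nat) (delta : R) : set 'rV[R]_n :=
  [set x | exists m : 'I_n -> int, forall j, x ord0 j = delta * (m j)%:~R].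

Definition cell (R : realType) (n : nat) (delta : R) (m : 'I_n -> int)
  : set 'rV[R]_n :=
  [set x | forall j, ((m j)%:~R - 2^-1) * delta <= x ord0 j
                     /\ x ord0 j < ((m j)%:~R + 2^-1) * delta].

(* the delta-roundoff of x: delta m where x lies in C_delta(m);
   coordinatewise m_j = floor (x_j / delta + 1/2) *)
Definition roundoff (R : realType) (n : nat) (delta : R) (x : 'rV[R]_n)
  : 'rV[R]_n :=
  \row_j (delta * (Num.floor (x ord0 j / delta + 2^-1))%:~R).

Definition roundoff_map (R : realType) (n : nat) (delta : R)
  (w : 'rV[R]_n -> 'rV[R]_n) : 'rV[R]_n -> 'rV[R]_n :=
  fun x => roundoff delta (w x).

Definition absorbing (R : realType) (n : nat) (delta : R)
  (f : 'rV[R]_n -> 'rV[R]_n) (L : set 'rV[R]_n) : Prop :=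
  L `<=` grid delta /\
  forall x, grid delta x ->
    exists N : nat, forall i : nat, (N <= i)%N -> L (iter i f x).

Definition minimal_absorbing (R : realType) (n : nat) (delta : R)
  (f : 'rV[R]_n -> 'rV[R]_n) : set 'rV[R]_n :=
  \bigcap_(L in absorbing delta f) L.

Lemma roundoff_cell_spec (R : realType) (n : nat) (delta : R) (x : 'rV[R]_n) :
  0 < delta ->
  exists m : 'I_n -> int, cell delta m x /\
    forall j, roundoff delta x ord0 j = delta * (m j)%:~R.
Proof.
move=> d0; exists (fun j => Num.floor (x ord0 j / delta + 2^-1)); split; last first.
  by move=> j; rewrite mxE.
move=> j; set y := x ord0 j / delta + 2^-1.
have := floor_le y; have := floorD1_gt y; rewrite /y => h1 h2; split.
- have : ((Num.floor y)%:~R - 2^-1) <= x ord0 j / delta by rewrite /y; lra.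
  by rewrite ler_pdivlMr.
- have : x ord0 j / delta < ((Num.floor y)%:~R + 2^-1).
    by move: h1; rewrite /y intrD; lra.
  by rewrite ltr_pdivrMr.
Qed.

(* Main.v *)
Require Import Defs.
From mathcomp Require Import all_boot all_order all_algebra.
From mathcomp Require Import all_classical all_reals.
From mathcomp Require Import ring lra zify.
Import Order.TTheory GRing.Theory Num.Theory.
Local Open Scope ring_scope.
Local Open Scope classical_set_scope.

Section Aux.
Variable R : realType.

Lemma int_trich (k : int) :
  (k%:~R : R) <= -1 \/ k = 0 \/ 1 <= (k%:~R : R).
Proof.
have : (k <= -1)%R \/ k = 0 \/ (1 <= k)%R by lia.
case=> [h|[->|h]]; [left|right;left|right;right] => //.
  by rewrite -(ler_int R) in h.
by rewrite -(ler_int R) in h.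
Qed.

Lemma coord_bound (delta y oj : R) (a : int) :
  0 < delta -> oj = delta * a%:~R ->
  (delta * (Num.floor (y / delta + 2^-1))%:~R - oj) ^+ 2 <= 4 * (y - oj) ^+ 2.
Proof.
move=> d0 ->.
set s := y / delta.
have ys : y = delta * s by rewrite /s mulrC divfK // gt_eqF.
rewrite ys.
have h1 := floor_le (s + 2^-1).
have h2 := floorD1_gt (s + 2^-1).
set K := Num.floor (s + 2^-1) in h1 h2 *.
have -> : delta * K%:~R - delta * a%:~R = delta * (K - a)%:~R by rewrite intrB; ring.
have -> : delta * s - delta * a%:~R = delta * (s - a%:~R) by ring.
have hK : (K - a)%:~R = (K%:~R : R) - a%:~R by rewrite intrB.
have key : ((K - a)%:~R : R) ^+ 2 <= 4 * (s - a%:~R) ^+ 2.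
  case: (int_trich (K - a)) => [h|[h|h]].
  - rewrite hK in h *; nra.
  - by rewrite h mulr0z expr0n /= mulr_ge0 // sqr_ge0.
  - rewrite hK in h *; nra.
have dd : 0 <= delta ^+ 2 by rewrite sqr_ge0.
rewrite !exprMn; nra.
Qed.

End Aux.

Theorem theorem6 (R : realType) (n : nat) (delta lambda : R)
  (w : 'rV[R]_n -> 'rV[R]_n) (o : 'rV[R]_n) :
  0 < delta ->
  contraction w lambda ->
  lambda < 2^-1 ->
  w o = o ->
  grid delta o ->
  minimal_absorbing delta (roundoff_map delta w) = [set o].
Proof.
move=> d0 [/andP[l0 l1] hc] lh wo [a ha].
set f := roundoff_map delta w.
pose D2 (x : 'rV[R]_n) := \sum_(j < n) (x ord0 j - o ord0 j) ^+ 2.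
have D2ge0 x : 0 <= D2 x by apply: sumr_ge0 => j _; rewrite sqr_ge0.
have fgrid x : grid delta (f x).
  by exists (fun j => Num.floor (w x ord0 j / delta + 2^-1)) => j; rewrite mxE.
have fo : f o = o.
  apply/rowP => j; rewrite /f /roundoff_map wo /roundoff !mxE.
  rewrite ha (_ : Num.floor _ = a j) //; apply: floor_def.
  rewrite [delta * _]mulrC mulfK ?gt_eqF // intrD; apply/andP; split; lra.
have iter_o k : iter k f o = o by elim: k => //= k ->.
have Dw x : D2 (w x) <= lambda ^+ 2 * D2 x.
  have := hc x o; rewrite wo /dE -/(D2 (w x)) -/(D2 x) => h.
  rewrite -(sqr_sqrtr (D2ge0 (w x))) -(sqr_sqrtr (D2ge0 x)) -exprMn.
  by rewrite ler_pXn2r // ?nnegrE ?sqrtr_ge0 // mulr_ge0 // sqrtr_ge0.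
have Df x : D2 (f x) <= 4 * lambda ^+ 2 * D2 x.
  apply: (le_trans _ (_ : 4 * D2 (w x) <= _)); last first.
    by rewrite -mulrA ler_wpM2l // Dw.
  rewrite /D2 mulr_sumr; apply: ler_sum => j _.
  rewrite /f /roundoff_map /roundoff mxE; exact: coord_bound.
have Dlow x : grid delta x -> x <> o -> delta ^+ 2 <= D2 x.
  move=> [m hm] xo.
  have [j hj] : exists j, x ord0 j != o ord0 j.
    apply/existsP; apply: contra_notT xo => /existsPn h.
    by apply/rowP => j; apply/eqP; move: (h j); rewrite negbK.
  rewrite /D2 (bigD1 j) //= -[X in X <= _]addr0; apply: lerD; last first.
    by apply: sumr_ge0 => i _; rewrite sqr_ge0.
  move: hj; rewrite hm ha -mulrBr -intrB exprMn => hj.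
  rewrite -[X in X <= _]mulr1 ler_wpM2l ?sqr_ge0 //.
  case: (int_trich R (m j - a j)) => [h|[h|h]]; [nra| |nra].
  by move: hj; move/eqP: h; rewrite subr_eq0 => /eqP ->; rewrite eqxx.
set eps := (1 - 4 * lambda ^+ 2) * delta ^+ 2.
have eps0 : 0 < eps by rewrite /eps mulr_gt0 ?exprn_gt0 //; nra.
have main k : forall x, grid delta x -> D2 x < k%:R * eps -> iter k f x = o.
  elim: k => [|k IH] x gx hx.
    by move: hx; rewrite mul0r => /lt_le_trans /(_ (D2ge0 x)); rewrite ltxx.
  rewrite iterSr.
  have [->|xo] := pselect (x = o); first by rewrite fo iter_o.
  apply: IH; first exact: fgrid.
  have := Dlow x gx xo; have := Df x; have := D2ge0 x.
  move: hx; rewrite -natr1 mulrDl mul1r /eps => hx h1 h2 h3.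
  have hc0 : 0 <= 1 - 4 * lambda ^+ 2 by nra.
  have hp := ler_wpM2l hc0 h3.
  nra.
rewrite eqEsubset; split.
  move=> x hx; apply: hx; split; first by move=> y ->; exists a.
  move=> z gz; exists (Num.Def.archi_bound (D2 z / eps)) => i hi.
  rewrite /= -(subnK hi) iterD (main _ z gz) ?iter_o //.
  by rewrite -ltr_pdivrMr // archi_boundP // divr_ge0 // ltW.
move=> x -> L [hL hL2].
have [N hN] := hL2 o (ex_intro _ a ha).
by have := hN N (leqnn N); rewrite iter_o.
Qed.
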